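(* Consider the single-storage problem (P1) with round-trip efficiency $\eta\in(0,1]$, i.e. with the constraint $S_t-S_{t-1}\le p_t^+$ replaced by $S_t-S_{t-1}\le\eta\,p_t^+$. With $0\le S_0\le\overline{S}$, $\overline{x}\ge 0$, the problem is feasible and, if the qualified capacity is $\overline{S}$ or $\overline{x}$, the resulting EUE (average over finitely many profiles of $\sum_tp_t^-+$ optimal value) is continuous, piecewise linear and non-increasing in the qualified capacity, so the MRI is non-negative wherever it exists.
   Context: For real $P_t$ (net capacity surplus at hour $t$), $p_t^+=\max\{P_t,0\}$, $p_t^-=\max\{-P_t,0\}$. Problem (P1): minimize $\sum_{t=1}^T\min\{0,S_t-S_{t-1}\}$ over $S_1,\dots,S_T$ subject to $0\le S_t\le\overline{S}$, $-\overline{x}\le S_t-S_{t-1}\le\overline{x}$, $-p_t^-\le S_t-S_{t-1}\le p_t^+$ for all $t$, with $S_0$ a given constant. $\mathrm{MRI}=-\partial\mathrm{EUE}/\partial\mathrm{QC}$. *)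

(* Defs.v *)
From HB Require Import structures.
From mathcomp Require Import all_boot all_order all_algebra.
From mathcomp Require Import all_classical all_reals all_analysis.
Set Implicit Arguments. Unset Strict Implicit. Unset Printing Implicit Defensive.
Import Order.TTheory GRing.Theory Num.Theory.
Import numFieldNormedType.Exports.
Local Open Scope classical_set_scope.
Local Open Scope ring_scope.

Section Storage.
Variable R : realType.

Definition pplus (x : R) : R := Num.max x 0.
Definition pminus (x : R) : R := Num.max (- x) 0.

(* Feasible trajectories of (P1) with round-trip efficiency eta, horizon T,
   energy capacity Sbar, power capacity xbar, initial state S0 and net
   capacity surplus profile p (hours t = 1..T).  Only s 0 .. s T matter. *)
Definition feasible (T : nat) (eta Sbar xbar S0 : R) (p : nat -> R)
    (s : nat -> R) : Prop :=
  s 0%N = S0 /\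
  forall t : nat, (1 <= t <= T)%N ->
    [/\ 0 <= s t <= Sbar,
        - xbar <= s t - s t.-1 <= xbar &
        - pminus (p t) <= s t - s t.-1 <= eta * pplus (p t)].

Definition objective (T : nat) (s : nat -> R) : R :=
  \sum_(1 <= t < T.+1) Num.min 0 (s t - s t.-1).

Definition optval (T : nat) (eta Sbar xbar S0 : R) (p : nat -> R) : R :=
  inf [set objective T s | s in feasible T eta Sbar xbar S0 p].

Definition EUE (T K : nat) (eta Sbar xbar S0 : R) (P : 'I_K -> nat -> R) : R :=
  K%:R^-1 * \sum_(k < K)
     (\sum_(1 <= t < T.+1) pminus (P k t) + optval T eta Sbar xbar S0 (P k)).

Definition pw_linear_from (a : R) (f : R -> R) : Prop :=
  exists (n : nat) (b m c : nat -> R),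
    [/\ b 0%N = a,
        (forall i, (i < n)%N -> b i < b i.+1),
        (forall i x, (i < n)%N -> b i <= x <= b i.+1 -> f x = m i * x + c i) &
        (forall x, b n <= x -> f x = m n * x + c n)].

End Storage.

(* Main.v *)
Require Import Defs.
From HB Require Import structures.
From mathcomp Require Import all_boot all_order all_algebra.
From mathcomp Require Import all_classical all_reals all_analysis.
From mathcomp Require Import ring lra zify.
Import Order.TTheory GRing.Theory Num.Theory.
Import numFieldNormedType.Exports.
Local Open Scope classical_set_scope.
Local Open Scope ring_scope.


Section Helpers.
Variable R : realType.
Implicit Types x y z : R.

Lemma minCs x y : (Num.min x y = x /\ x <= y) \/ (Num.min x y = y /\ y < x).
Proof.
rewrite minEle; case: leP => h; [left|right]; done.
Qed.
Lemma maxCs x y : (Num.max x y = y /\ x <= y) \/ (Num.max x y = x /\ y < x).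
Proof.
rewrite maxEle; case: leP => h; [left|right]; done.
Qed.
Lemma absCs x : (`|x| = x /\ 0 <= x) \/ (`|x| = - x /\ x < 0).
Proof.
have [h|h] := lerP 0 x; [left; rewrite ger0_norm | right; rewrite ltr0_norm] => //.
Qed.

Definition aff (l : R * R) (x : R) : R := l.1 * x + l.2.

Lemma aff_cont l : continuous (aff l).
Proof.
move=> x; rewrite /aff.
apply: continuousD; last exact: cst_continuous.
apply: continuousM; [exact: cst_continuous | exact: cvg_id].
Qed.

Lemma cont_near (g : R -> R) (x : R) e : continuous g -> 0 < e ->
  exists2 d : R, 0 < d & forall t, `|x - t| < d -> `|g x - g t| < e.
Proof.
move=> gc e0.
have : \forall t \near x, `|g x - g t| < e.
  exact: ((fcvgrPdist_lt (g x)).1 (gc x) e e0).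
move=> /nbhs_ballP[d /= d0 Hd]; exists d => // t xt; apply: Hd.
Qed.


Definition Cl (f : R -> R) := continuous f /\
  exists L : seq (R * R), forall x, exists2 l, l \in L & f x = aff l x.

Lemma Cl_ext f g : (forall x, f x = g x) -> Cl f -> Cl g.
Proof. by move=> fg; rewrite (funext fg). Qed.

Lemma Cl_cst c : Cl (fun=> c).
Proof.
split; first exact: cst_continuous.
by exists [:: (0, c)] => x; exists (0, c); rewrite ?inE // /aff mul0r add0r.
Qed.

Lemma Cl_id : Cl (fun x => x).
Proof.
split; first by move=> x; exact: cvg_id.
by exists [:: (1, 0)] => x; exists (1, 0); rewrite ?inE // /aff mul1r addr0.
Qed.

Lemma Cl_add f g : Cl f -> Cl g -> Cl (fun x => f x + g x).
Proof.
move=> [fc [L1 H1]] [gc [L2 H2]]; split; first by move=> x; apply: cvgD; [exact: fc | exact: gc].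
exists [seq (l1.1 + l2.1, l1.2 + l2.2) | l1 <- L1, l2 <- L2] => x.
have [l1 l1L ->] := H1 x; have [l2 l2L ->] := H2 x.
exists (l1.1 + l2.1, l1.2 + l2.2).
  exact: (allpairs_f (fun l1 l2 => (l1.1 + l2.1, l1.2 + l2.2))).
rewrite /aff /=; ring.
Qed.

Lemma Cl_opp f : Cl f -> Cl (fun x => - f x).
Proof.
move=> [fc [L1 H1]]; split; first by move=> x; apply: cvgN; exact: fc.
exists [seq (- l.1, - l.2) | l <- L1] => x.
have [l1 l1L ->] := H1 x; exists (- l1.1, - l1.2).
  exact: (map_f (fun l => (- l.1, - l.2))).
rewrite /aff /=; ring.
Qed.

Lemma Cl_sub f g : Cl f -> Cl g -> Cl (fun x => f x - g x).
Proof. by move=> hf hg; apply: Cl_add => //; exact: Cl_opp. Qed.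

Lemma Cl_scale k f : Cl f -> Cl (fun x => k * f x).
Proof.
move=> [fc [L1 H1]]; split.
  by move=> x; apply: cvgM; [exact: cvg_cst | exact: fc].
exists [seq (k * l.1, k * l.2) | l <- L1] => x.
have [l1 l1L ->] := H1 x; exists (k * l1.1, k * l1.2).
  exact: (map_f (fun l => (k * l.1, k * l.2))).
rewrite /aff /=; ring.
Qed.

Lemma Cl_min f g : Cl f -> Cl g -> Cl (fun x => Num.min (f x) (g x)).
Proof.
move=> [fc [L1 H1]] [gc [L2 H2]]; split; first exact: min_fun_continuous.
exists (L1 ++ L2) => x.
have [l1 l1L E1] := H1 x; have [l2 l2L E2] := H2 x.
have [[-> _]|[-> _]] := minCs (f x) (g x).
  by exists l1; rewrite // mem_cat l1L.
by exists l2; rewrite // mem_cat l2L orbT.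
Qed.

Lemma Cl_max f g : Cl f -> Cl g -> Cl (fun x => Num.max (f x) (g x)).
Proof.
move=> [fc [L1 H1]] [gc [L2 H2]]; split; first exact: max_fun_continuous.
exists (L1 ++ L2) => x.
have [l1 l1L E1] := H1 x; have [l2 l2L E2] := H2 x.
have [[-> _]|[-> _]] := maxCs (f x) (g x).
  by exists l2; rewrite // mem_cat l2L orbT.
by exists l1; rewrite // mem_cat l1L.
Qed.

Lemma Cl_sum (I : Type) (r : seq I) (P : pred I) (F : I -> R -> R) :
  (forall i, Cl (F i)) -> Cl (fun x => \sum_(i <- r | P i) F i x).
Proof.
move=> HF; elim: r => [|i r IH].
  by apply: (@Cl_ext (fun=> 0)); [move=> x; rewrite big_nil | exact: Cl_cst].
case Pi: (P i).
  apply: (@Cl_ext (fun x => F i x + \sum_(j <- r | P j) F j x)).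
    by move=> x; rewrite big_cons Pi.
  exact: Cl_add.
apply: (@Cl_ext (fun x => \sum_(j <- r | P j) F j x)) => //.
by move=> x; rewrite big_cons Pi.
Qed.

Lemma aff_between l a b z : a <= z <= b ->
  Num.min (aff l a) (aff l b) <= aff l z <= Num.max (aff l a) (aff l b).
Proof.
move=> /andP[az zb]; rewrite /aff.
have [h|h] := lerP 0 l.1;
have [[-> ?]|[-> ?]] := minCs (l.1 * a + l.2) (l.1 * b + l.2);
have [[-> ?]|[-> ?]] := maxCs (l.1 * a + l.2) (l.1 * b + l.2);
apply/andP; split; nra.
Qed.

Lemma aff_nozero_bound l a b z : a <= z <= b ->
  (forall w, a <= w <= b -> aff l w != 0) ->
  Num.min `|aff l a| `|aff l b| <= `|aff l z|.
Proof.
move=> Hz Hnz; have /andP[az zb] := Hz.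
have ab : a <= b by apply: le_trans az zb.
have Hs : 0 < aff l a * aff l b.
  rewrite ltNge; apply/negP => Hle.
  have Hv : Num.min (aff l a) (aff l b) <= 0 <= Num.max (aff l a) (aff l b).
    have [[-> ?]|[-> ?]] := minCs (aff l a) (aff l b);
    have [[-> ?]|[-> ?]] := maxCs (aff l a) (aff l b);
    apply/andP; split; nra.
  have [c] := IVT ab (continuous_subspaceT (aff_cont l)) Hv.
  rewrite in_itv /= => Hc Hc0.
  by move: (Hnz c Hc); rewrite Hc0 eqxx.
have /andP[H1 H2] := @aff_between l a b z Hz.
move: Hs H1 H2; set A := aff l a; set B := aff l b; set Z := aff l z => Hs H1 H2.
have [[Ap Bp]|[An Bn]] : (0 < A /\ 0 < B) \/ (A < 0 /\ B < 0).
  have [h|h] := ltrP 0 A; [left|right].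
  - by split => //; rewrite ltNge; apply/negP => hb; nra.
  - have hA : A < 0 by rewrite lt_neqAle h andbT; apply/negP => /eqP E; move: Hs; rewrite E mul0r ltxx.
    by split => //; rewrite ltNge; apply/negP => hb; nra.
  have Zp : 0 < Z by apply: lt_le_trans H1; rewrite lt_min Ap Bp.
  by rewrite (gtr0_norm Ap) (gtr0_norm Bp) (gtr0_norm Zp).
have M : Num.max A B < 0 by rewrite gt_max An Bn.
have Zn : Z < 0 by exact: le_lt_trans H2 M.
rewrite (ltr0_norm An) (ltr0_norm Bn) (ltr0_norm Zn).
move: H2; have [[-> ?]|[-> ?]] := minCs (- A) (- B);
have [[-> ?]|[-> ?]] := maxCs A B; lra.
Qed.

Lemma big_min_gt0 (I : eqType) (r : seq I) (P : pred I) (e : I -> R) :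
  (forall i, i \in r -> P i -> 0 < e i) -> 0 < \big[Num.min/1]_(i <- r | P i) e i.
Proof.
elim: r => [|i r IH] H; first by rewrite big_nil ltr01.
have H' : forall j, j \in r -> P j -> 0 < e j.
  by move=> j jr Pj; apply: H; rewrite ?inE ?jr ?orbT.
rewrite big_cons; case: ifP => Pi; last exact: IH H'.
by rewrite lt_min (IH H') andbT; apply: H; rewrite ?inE ?eqxx.
Qed.

Lemma big_min_le (I : eqType) (r : seq I) (P : pred I) (e : I -> R) j :
  j \in r -> P j -> \big[Num.min/1]_(i <- r | P i) e i <= e j.
Proof.
elim: r => [|i r IH]; first by rewrite in_nil.
rewrite inE big_cons => /orP[/eqP <-|jr] Pj.
  by rewrite Pj ge_min lexx.
case: (P i); last exact: IH.
by rewrite ge_min IH ?orbT.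
Qed.

Lemma scal_between x t : 0 <= t <= 1 -> Num.min 0 x <= x * t <= Num.max 0 x.
Proof.
move=> /andP[t0 t1].
have [[-> ?]|[-> ?]] := minCs 0 x; have [[-> ?]|[-> ?]] := maxCs 0 x;
apply/andP; split; nra.
Qed.

Lemma piece_line f (L : seq (R * R)) (J : R -> Prop) y :
  continuous f -> (forall x, exists2 l, l \in L & f x = aff l x) ->
  (forall z l1 l2, J z -> l1 \in L -> l2 \in L -> aff l1 z = aff l2 z -> l1 = l2) ->
  (forall y1 y2 z, J y1 -> J y2 -> y1 <= z <= y2 -> J z) -> J y ->
  exists2 l, l \in L & forall z, J z -> f z = aff l z.
Proof.
move=> fc HL Huniq Hconv Jy.
have [l lL fy] := HL y.
exists l => // z Jz.
case: (boolP (f z == aff l z)) => [/eqP //|Hne]; exfalso.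
pose g x := f x - aff l x.
have gc : continuous g by move=> x; apply: cvgB; [exact: fc | exact: aff_cont].
have gy : g y = 0 by rewrite /g fy subrr.
have gz : g z != 0 by rewrite /g subr_eq0.
pose d (l' : R * R) := (l'.1 - l.1, l'.2 - l.2).
have affd l' w : aff (d l') w = aff l' w - aff l w by rewrite /aff /=; ring.
have key : forall a b, a <= b -> (forall w, a <= w <= b -> J w) ->
    ((g a = 0 /\ g b = g z) \/ (g a = g z /\ g b = 0)) -> False.
  move=> a b ab Jab Hab.
  have dnz : forall l', l' \in L -> l' != l -> forall w, a <= w <= b ->
      aff (d l') w != 0.
    move=> l' l'L nl w Hw; rewrite affd subr_eq0; apply/eqP => E.
    by move/eqP: nl; apply; apply: Huniq (Jab w Hw) l'L lL E.
  pose e l' := Num.min `|aff (d l') a| `|aff (d l') b|.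
  have aab : a <= a <= b by rewrite lexx ab.
  have bab : a <= b <= b by rewrite lexx ab.
  have epos : forall l', l' \in L -> l' != l -> 0 < e l'.
    by move=> l' l'L nl; rewrite /e lt_min !normr_gt0 !dnz.
  have ebound : forall l', l' \in L -> l' != l -> forall w, a <= w <= b ->
      e l' <= `|aff (d l') w|.
    by move=> l' l'L nl w Hw; apply: aff_nozero_bound => //; exact: dnz.
  pose eps := \big[Num.min/1]_(l' <- L | l' != l) e l'.
  have eps0 : 0 < eps by apply: big_min_gt0.
  have epsle : forall l', l' \in L -> l' != l -> eps <= e l'.
    by move=> l' l'L nl; apply: big_min_le.
  have gbound : forall w, a <= w <= b -> g w != 0 -> eps <= `|g w|.
    move=> w Hw gw; have [lw lwL fw] := HL w.
    have nl : lw != l.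
      by apply: contraNneq gw => E; rewrite /g fw E subrr.
    have -> : g w = aff (d lw) w by rewrite affd /g fw.
    exact: le_trans (epsle _ lwL nl) (ebound _ lwL nl _ Hw).
  have gzb : eps <= `|g z|.
    by case: Hab => [[_ E]|[E _]]; rewrite -E; apply: gbound => //; rewrite E.
  have gz0 : 0 < `|g z| by rewrite normr_gt0.
  pose t := eps / (2 * `|g z|).
  have t2 : t * (2 * `|g z|) = eps.
    by rewrite /t mulfVK // mulf_neq0 // ?pnatr_eq0 // gt_eqF.
  have t0 : 0 < t by rewrite /t divr_gt0 // mulr_gt0.
  have th : t <= 1 / 2 by nra.
  pose v := g z * t.
  have vbounds : Num.min (g a) (g b) <= v <= Num.max (g a) (g b).
    rewrite /v; case: Hab => [[-> ->]|[-> ->]]; last rewrite minC maxC;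
    apply: scal_between; rewrite (ltW t0) /=; lra.
  have [c cab gcv] := @IVT R g a b v ab (continuous_subspaceT gc) vbounds.
  move: cab; rewrite in_itv /= => cab.
  have v0 : v != 0 by rewrite /v mulf_neq0 // gt_eqF.
  have := gbound c cab; rewrite gcv => /(_ v0).
  rewrite /v normrM (ger0_norm (ltW t0)) => H.
  nra.
have [yz|zy] := lerP y z.
  apply: (key y z yz) => [w Hw|]; first exact: Hconv Jy Jz Hw.
  by left.
apply: (key z y (ltW zy)) => [w Hw|]; first exact: Hconv Jz Jy Hw.
by right.
Qed.

Lemma zero_at (g : R -> R) lo hi x : continuous g ->
  (forall z, lo < z < hi -> g z = 0) ->
  (forall d : R, 0 < d -> exists t : R, `|x - t| < d /\ lo < t < hi) -> g x = 0.
Proof.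
move=> gc H Ht; apply/eqP; apply/negPn/negP => gx.
have e0 : 0 < `|g x| by rewrite normr_gt0.
have [d d0 Hd] := @cont_near g x _ gc e0.
have [t [xt Jt]] := Ht d d0.
by move: (Hd t xt); rewrite (H t Jt) subr0 ltxx.

Qed.

Lemma eq_ends (f h : R -> R) lo hi : continuous f -> continuous h -> lo < hi ->
  (forall z, lo < z < hi -> f z = h z) -> f lo = h lo /\ f hi = h hi.
Proof.
move=> fc hc lohi H.
have gc : continuous (fun x => f x - h x).
  by move=> x; apply: cvgB; [exact: fc | exact: hc].
have H0 : forall z, lo < z < hi -> f z - h z = 0 by move=> z /H ->; rewrite subrr.
split; apply/eqP; rewrite -subr_eq0; apply/eqP.
  apply: (@zero_at (fun x => f x - h x) lo hi lo gc H0) => d d0.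
  exists (lo + Num.min d (hi - lo) / 2).
  have [[-> ?]|[-> ?]] := minCs d (hi - lo).
    rewrite opprD addrA subrr sub0r normrN ger0_norm; [|lra]; split; [lra|apply/andP; split; lra].
  rewrite opprD addrA subrr sub0r normrN ger0_norm; [|lra]; split; [lra|apply/andP; split; lra].
apply: (@zero_at (fun x => f x - h x) lo hi hi gc H0) => d d0.
exists (hi - Num.min d (hi - lo) / 2).
have [[-> ?]|[-> ?]] := minCs d (hi - lo).
  rewrite opprB addrC subrK ger0_norm; [|lra]; split; [lra|apply/andP; split; lra].
rewrite opprB addrC subrK ger0_norm; [|lra]; split; [lra|apply/andP; split; lra].
Qed.

Lemma Cl_pw f a : Cl f -> pw_linear_from a f.
Proof.
move=> [fc [L HL]].
pose cross (l1 l2 : R * R) := (l2.2 - l1.2) / (l1.1 - l2.1).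
pose X := [seq cross l1 l2 | l1 <- L, l2 <- L].
pose bs := sort <=%O (undup [seq x <- X | a < x]).
pose n := size bs.
pose b i := if i is j.+1 then nth 0 bs j else a.
have Hsort : sorted <%O bs by rewrite sort_lt_sorted undup_uniq.
have Hmem : forall x, (x \in bs) = (a < x) && (x \in X).
  by move=> x; rewrite mem_sort mem_undup mem_filter.
have bgt : forall j, (j < n)%N -> a < nth 0 bs j.
  by move=> j jn; have := mem_nth 0 jn; rewrite Hmem => /andP[].
have Hmono : forall i j, (i < n)%N -> (j < n)%N ->
    (nth 0 bs i < nth 0 bs j) = (i < j)%N.
  by move=> i j ilt jlt; apply: lt_sorted_ltn_nth.
have Hinc : forall i, (i < n)%N -> b i < b i.+1.
  case=> [|i] ilt; first exact: bgt.
  by rewrite /= Hmono ?ltnSn // ltnW.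
have bge : forall i, (i <= n)%N -> a <= b i.
  case=> [|i] ilt //=; exact/ltW/bgt.
have Hsep : forall i z, (i <= n)%N -> b i < z -> ((i < n)%N -> z < b i.+1) ->
    z \in bs -> False.
  move=> i z iln biz zbi zbs.
  have jn : (index z bs < n)%N by rewrite index_mem.
  have zE : z = nth 0 bs (index z bs) by rewrite nth_index.
  move: jn zE; set j := index z bs => jn zE.
  have H1 : (i < n)%N -> (j < i)%N.
    by move=> ilt; have := zbi ilt; rewrite zE /= Hmono.
  have H2 : (0 < i)%N -> (i.-1 < j)%N.
    case: i iln biz zbi {H1} => // i iln biz _ _ /=.
    by move: biz; rewrite zE /= Hmono // ltnW.
  case: i iln biz zbi H1 H2 => [|i] iln _ _ H1 H2.
    by have := H1 (leq_ltn_trans (leq0n j) jn).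
  have := H2 isT; rewrite /=.
  case: (ltnP i.+1 n) => [ilt|ige]; first by move: (H1 ilt); lia.
  lia.
pose J i z := b i < z /\ ((i < n)%N -> z < b i.+1).
have Huniq : forall i, (i <= n)%N -> forall z l1 l2, J i z -> l1 \in L -> l2 \in L ->
    aff l1 z = aff l2 z -> l1 = l2.
  move=> i iln z [m1 c1] [m2 c2] [Jz1 Jz2] L1 L2; rewrite /aff /= => E.
  have [em|nm] := eqVneq m1 m2.
    by subst m2; have -> : c1 = c2 by move: E => /addrI.
  exfalso.
  have h : (m1 - m2) * z = c2 - c1 by rewrite mulrBl; lra.
  have zE : z = cross (m1, c1) (m2, c2).
    by rewrite /cross /= -h; field; rewrite subr_eq0.
  apply: (Hsep i z iln Jz1 Jz2).
  rewrite Hmem; apply/andP; split.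
    exact: le_lt_trans (bge i iln) Jz1.
  by rewrite zE; apply: (allpairs_f cross).
have Hconv : forall i y1 y2 z, J i y1 -> J i y2 -> y1 <= z <= y2 -> J i z.
  move=> i y1 y2 z [h1 _] [_ h2] /andP[z1 z2]; split.
    exact: lt_le_trans h1 z1.
  by move=> ilt; exact: le_lt_trans z2 (h2 ilt).
have Hpiece : forall i, exists l : R * R, (i <= n)%N -> forall x, b i <= x ->
    ((i < n)%N -> x <= b i.+1) -> f x = aff l x.
  move=> i; case: (leqP i n) => [iln|]; last by exists (0, 0).
  pose hi := if (i < n)%N then b i.+1 else b i + 1.
  have lohi : b i < hi.
    by rewrite /hi; case: ifP => [/Hinc //|_]; lra.
  pose y := (b i + hi) / 2.
  have Jy : J i y.
    split; first by rewrite /y; lra.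
    by move=> ilt; rewrite /y /hi ilt; move: lohi; rewrite /hi ilt; lra.
  have [l lL Hl] := @piece_line f L (J i) y fc HL (Huniq i iln) (Hconv i) Jy.
  exists l => _.
  have Hopen : forall z, b i < z < hi -> f z = aff l z.
    move=> z /andP[z1 z2]; apply: Hl; split => // ilt.
    by move: z2; rewrite /hi ilt.
  have [Elo Ehi] := @eq_ends f (aff l) (b i) hi fc (aff_cont l) lohi Hopen.
  move=> x; rewrite le_eqVlt => /orP[/eqP <-|bx] // xb.
  case: (ltnP i n) => [ilt|ige].
    move: (xb ilt); rewrite le_eqVlt => /orP[/eqP ->|xb'].
      by move: Ehi; rewrite /hi ilt.
    by apply: Hl; split => // _.
  by apply: Hl; split => // ilt; move: ige; rewrite leqNgt ilt.
have [fn Hfn] := choice Hpiece.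
exists n, b, (fun i => (fn i).1), (fun i => (fn i).2); split => //.
- move=> i x ilt /andP[x1 x2]; rewrite (Hfn i (ltnW ilt) x x1) //.
- by move=> x bx; rewrite (Hfn n (leqnn n) x bx) // ltnn.
Qed.

End Helpers.
Arguments aff {R}. Arguments Cl {R}. Arguments Cl_cst {R}. Arguments Cl_id {R}.
Arguments Cl_add {R}. Arguments Cl_opp {R}. Arguments Cl_sub {R}. Arguments Cl_scale {R}.
Arguments Cl_min {R}. Arguments Cl_max {R}. Arguments Cl_sum {R}. Arguments Cl_ext {R}.
Arguments Cl_pw {R}.


Arguments minCs {R} x y.
Arguments maxCs {R} x y.
Arguments absCs {R} x.

Section Storage2.
Variable R : realType.
Implicit Types x y z : R.

Lemma pp_pos x : 0 < x -> pplus x = x /\ pminus x = 0.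
Proof.
move=> h; rewrite /pplus /pminus.
have [[-> ?]|[-> ?]] := maxCs x 0; have [[-> ?]|[-> ?]] := maxCs (- x) 0; split; lra.
Qed.
Lemma pp_npos x : x <= 0 -> pplus x = 0 /\ pminus x = - x.
Proof.
move=> h; rewrite /pplus /pminus.
have [[-> ?]|[-> ?]] := maxCs x 0; have [[-> ?]|[-> ?]] := maxCs (- x) 0; split; lra.
Qed.

Definition gstep (eta Sbar xbar pt s : R) : R :=
  Num.max 0 (Num.min Sbar (s + Num.min xbar (eta * pplus pt)) - Num.min xbar (pminus pt)).

Fixpoint gtraj (eta Sbar xbar S0 : R) (p : nat -> R) (t : nat) : R :=
  match t with
  | 0%N => S0
  | t'.+1 => gstep eta Sbar xbar (p t'.+1) (gtraj eta Sbar xbar S0 p t')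
  end.

Lemma ul_facts (eta xbar pt : R) : 0 <= eta -> 0 <= xbar ->
  (0 < pt /\ Num.min xbar (pminus pt) = 0 /\ 0 <= Num.min xbar (eta * pplus pt) /\
   Num.min xbar (eta * pplus pt) <= xbar /\
   Num.min xbar (eta * pplus pt) <= eta * pplus pt /\ pminus pt = 0)
  \/ (pt <= 0 /\ Num.min xbar (eta * pplus pt) = 0 /\ 0 <= Num.min xbar (pminus pt) /\
   Num.min xbar (pminus pt) <= xbar /\ Num.min xbar (pminus pt) <= pminus pt /\
   pplus pt = 0).
Proof.
move=> e0 x0.
have [h|h] := ltrP 0 pt; [left|right].
  have [E1 E2] := pp_pos _ h; rewrite E1 E2.
  have ep : 0 <= eta * pt by rewrite mulr_ge0 // ltW.
  have [[-> ?]|[-> ?]] := minCs xbar (eta * pt); have [[-> ?]|[-> ?]] := minCs xbar 0;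
  repeat split => //; lra.
have [E1 E2] := pp_npos _ h; rewrite E1 E2 mulr0.
have [[-> ?]|[-> ?]] := minCs xbar (- pt); have [[-> ?]|[-> ?]] := minCs xbar 0;
repeat split => //; lra.
Qed.

Lemma step_feas eta Sbar xbar pt s : 0 <= eta -> 0 <= xbar -> 0 <= s <= Sbar ->
  [/\ 0 <= gstep eta Sbar xbar pt s <= Sbar,
      - xbar <= gstep eta Sbar xbar pt s - s <= xbar &
      - pminus pt <= gstep eta Sbar xbar pt s - s <= eta * pplus pt].
Proof.
move=> e0 x0 /andP[s0 sS]; rewrite /gstep.
have HF := ul_facts eta xbar pt e0 x0.
move: HF.
set u := Num.min xbar (eta * pplus pt); set l := Num.min xbar (pminus pt) => HF.
set M := Num.min Sbar (s + u).
have [[E1 ?]|[E1 ?]] : (M = Sbar /\ Sbar <= s + u) \/ (M = s + u /\ s + u < Sbar)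
  := minCs Sbar (s + u);
set G := Num.max 0 (M - l);
have [[E2 ?]|[E2 ?]] : (G = M - l /\ 0 <= M - l) \/ (G = 0 /\ M - l < 0)
  := maxCs 0 (M - l);
case: HF => [[? [? [? [? [? Ep]]]]]|[? [? [? [? [? Ep]]]]]];
rewrite ?Ep ?mulr0; split; apply/andP; split; lra.
Qed.

Lemma minl0 x : 0 <= x -> Num.min 0 x = 0.
Proof. by move=> h; have [[-> ?]|[-> ?]] := minCs 0 x => //; lra. Qed.
Lemma minlr x : x <= 0 -> Num.min 0 x = x.
Proof. by move=> h; have [[-> ?]|[-> ?]] := minCs 0 x => //; lra. Qed.
Lemma maxr0 x : 0 <= x -> Num.max 0 x = x.
Proof. by move=> h; have [[-> ?]|[-> ?]] := maxCs 0 x => //; lra. Qed.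
Lemma minrr x y : y <= x -> Num.min x y = y.
Proof. by move=> h; have [[-> ?]|[-> ?]] := minCs x y => //; lra. Qed.

Lemma step_opt eta Sbar xbar pt g s s' Og Os : 0 <= eta -> 0 <= xbar ->
  0 <= g <= Sbar -> 0 <= s -> 0 <= s' <= Sbar ->
  - xbar <= s' - s <= xbar -> - pminus pt <= s' - s <= eta * pplus pt ->
  Og <= Os -> Og - g <= Os - s ->
  Og + Num.min 0 (gstep eta Sbar xbar pt g - g) <= Os + Num.min 0 (s' - s) /\
  Og + Num.min 0 (gstep eta Sbar xbar pt g - g) - gstep eta Sbar xbar pt g
    <= Os + Num.min 0 (s' - s) - s'.
Proof.
move=> e0 x0 /andP[g0 gS] s0 /andP[s'0 s'S] /andP[X1 X2] /andP[P1 P2] I1 I2.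
rewrite /gstep.
have HF := ul_facts eta xbar pt e0 x0.
move: HF.
set u := Num.min xbar (eta * pplus pt); set l := Num.min xbar (pminus pt) => HF.
have Hl : - l <= s' - s.
  by rewrite /l; have [[-> ?]|[-> ?]] := minCs xbar (pminus pt); lra.
have Hu : s' - s <= u.
  by rewrite /u; have [[-> ?]|[-> ?]] := minCs xbar (eta * pplus pt); lra.
case: HF => [[hp [El [u0 [ux [ue Ep]]]]]|[hn [Eu [l0 [lx [lp Ep]]]]]].
  rewrite El subr0.
  have [[EM ?]|[EM ?]] := minCs Sbar (g + u); rewrite EM.
    rewrite (@maxr0 Sbar) ?(@minl0 (Sbar - g)) ?(@minl0 (s' - s)); lra.
  rewrite (@maxr0 (g + u)) ?(@minl0 (g + u - g)) ?(@minl0 (s' - s)); lra.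
rewrite Eu addr0 (@minrr Sbar g) // (@minlr (s' - s)); last lra.
have [[EG ?]|[EG ?]] := maxCs 0 (g - l); rewrite EG.
  rewrite (@minlr (g - l - g)); lra.
rewrite (@minlr (0 - g)); lra.
Qed.

Lemma gtraj_bounds eta Sbar xbar S0 p t : 0 <= eta -> 0 <= xbar -> 0 <= S0 <= Sbar ->
  0 <= gtraj eta Sbar xbar S0 p t <= Sbar.
Proof.
move=> e0 x0 hS; elim: t => [//|t IH].
by case: (step_feas eta Sbar xbar (p t.+1) _ e0 x0 IH).
Qed.

Lemma gtraj_feas T eta Sbar xbar S0 p : 0 <= eta -> 0 <= xbar -> 0 <= S0 <= Sbar ->
  feasible T eta Sbar xbar S0 p (gtraj eta Sbar xbar S0 p).
Proof.
move=> e0 x0 hS; split => // t /andP[t1 tT].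
case: t t1 tT => // t _ _.
exact: (step_feas eta Sbar xbar (p t.+1) _ e0 x0 (gtraj_bounds eta Sbar xbar S0 p t e0 x0 hS)).
Qed.

Lemma gtraj_opt T eta Sbar xbar S0 p s : 0 <= eta -> 0 <= xbar -> 0 <= S0 <= Sbar ->
  feasible T eta Sbar xbar S0 p s ->
  objective T (gtraj eta Sbar xbar S0 p) <= objective T s.
Proof.
move=> e0 x0 hS [s0 Hs].
pose O t (x : nat -> R) := \sum_(1 <= u < t.+1) Num.min 0 (x u - x u.-1).
suff: forall t, (t <= T)%N -> O t (gtraj eta Sbar xbar S0 p) <= O t s /\
    O t (gtraj eta Sbar xbar S0 p) - gtraj eta Sbar xbar S0 p t <= O t s - s t.
  by move=> /(_ T (leqnn T)) [].
elim=> [|t IH] tT.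
  by rewrite /O !big_geq // s0 /=; split; lra.
have [I1 I2] := IH (ltnW tT).
have st0 : 0 <= s t.
  case: t {IH I1 I2} tT => [|t] tT; first by rewrite s0; case/andP: hS.
  by case: (Hs t.+1 (ltnW tT)) => /andP[].
have Orec : forall x : nat -> R, O t.+1 x = O t x + Num.min 0 (x t.+1 - x t).
  by move=> x; rewrite /O big_nat_recr.
rewrite !Orec.
case: (Hs t.+1 tT) => /andP[h1 h2] /andP[h3 h4] /andP[h5 h6].
have := @step_opt eta Sbar xbar (p t.+1) (gtraj eta Sbar xbar S0 p t) (s t) (s t.+1)
  (O t (gtraj eta Sbar xbar S0 p)) (O t s) e0 x0 (gtraj_bounds eta Sbar xbar S0 p t e0 x0 hS) st0.
rewrite h1 h2 h3 h4 h5 h6 => /(_ isT isT isT I1 I2) [H1 H2].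
split; [exact: H1|exact: H2].
Qed.

Lemma optval_eq T eta Sbar xbar S0 p : 0 <= eta -> 0 <= xbar -> 0 <= S0 <= Sbar ->
  optval T eta Sbar xbar S0 p = objective T (gtraj eta Sbar xbar S0 p).
Proof.
move=> e0 x0 hS; rewrite /optval.
set E := [set objective T s | s in feasible T eta Sbar xbar S0 p].
have Eg : E (objective T (gtraj eta Sbar xbar S0 p)).
  by exists (gtraj eta Sbar xbar S0 p) => //; exact: gtraj_feas.
have lb : lbound E (objective T (gtraj eta Sbar xbar S0 p)).
  by move=> _ [s fs <-]; exact: gtraj_opt.
apply/eqP; rewrite eq_le; apply/andP; split.
  by apply: (ge_inf _ Eg); exists (objective T (gtraj eta Sbar xbar S0 p)).
by apply: lb_le_inf => //; exists (objective T (gtraj eta Sbar xbar S0 p)).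
Qed.

End Storage2.
Arguments gstep {R}. Arguments gtraj {R}. Arguments gtraj_feas {R}.
Arguments gtraj_opt {R}. Arguments optval_eq {R}. Arguments gtraj_bounds {R}.


Section Storage3.
Variable R : realType.

Lemma Cl_gtraj_S (eta xbar S0 : R) p t : Cl (fun q => gtraj eta q xbar S0 p t).
Proof.
elim: t => [|t IH]; first exact: Cl_cst.
rewrite /= /gstep.
apply: Cl_max; first exact: Cl_cst.
apply: Cl_sub; last exact: Cl_cst.
apply: Cl_min; first exact: Cl_id.
by apply: Cl_add => //; exact: Cl_cst.
Qed.

Lemma Cl_gtraj_X (eta Sbar S0 : R) p t : Cl (fun q => gtraj eta Sbar q S0 p t).
Proof.
elim: t => [|t IH]; first exact: Cl_cst.
rewrite /= /gstep.
apply: Cl_max; first exact: Cl_cst.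
apply: Cl_sub; last by apply: Cl_min; [exact: Cl_id | exact: Cl_cst].
apply: Cl_min; first exact: Cl_cst.
apply: Cl_add => //; apply: Cl_min; [exact: Cl_id | exact: Cl_cst].
Qed.

Lemma Cl_obj T (G : R -> nat -> R) : (forall t, Cl (fun q => G q t)) ->
  Cl (fun q => objective T (G q)).
Proof.
move=> HG; rewrite /objective; apply: Cl_sum => t.
apply: Cl_min; first exact: Cl_cst.
exact: Cl_sub.
Qed.

Lemma nincr_derive (E : R -> R) a q : a < q ->
  (forall q1 q2, a <= q1 -> q1 <= q2 -> E q2 <= E q1) ->
  derivable E q 1 -> 0 <= - derive1 E q.
Proof.
move=> aq mono df; rewrite oppr_ge0.
apply: limr_le.
  under eq_fun; first (move=> h; rewrite -{2}(scaler1 h); over).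
  exact: df.
have qa0 : 0 < q - a by rewrite subr_gt0.
near=> h.
have h0 : h != 0 by near: h; exact: nbhs_dnbhs_neq.
have ha : a <= h + q.
  have : `|h| < q - a by near: h; exact: dnbhs0_lt.
  rewrite ltr_norml => /andP[? ?]; lra.
move: h0; rewrite neq_lt => /orP[h0|h0].
- rewrite nmulr_rle0 ?invr_lt0// subr_ge0.
  by apply: mono => //; lra.
- rewrite pmulr_rle0 ?invr_gt0// subr_le0.
  by apply: mono; lra.
Unshelve. all: end_near.
Qed.

Lemma feas_mono T (eta Sbar Sbar' xbar xbar' S0 : R) p s : Sbar <= Sbar' -> xbar <= xbar' ->
  feasible T eta Sbar xbar S0 p s -> feasible T eta Sbar' xbar' S0 p s.
Proof.
move=> hS hx [s0 Hs]; split => // t tT.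
case: (Hs t tT) => /andP[a1 a2] /andP[b1 b2] c; split => //; apply/andP; split; lra.
Qed.

Lemma final_pack (E Eg : R -> R) a : Cl Eg -> (forall q, a <= q -> E q = Eg q) ->
  (forall q1 q2, a <= q1 -> q1 <= q2 -> E q2 <= E q1) ->
  [/\ {within [set q : R | a <= q], continuous E}, pw_linear_from a E,
      (forall q1 q2 : R, a <= q1 -> q1 <= q2 -> E q2 <= E q1) &
      (forall q : R, a < q -> derivable E q 1 -> 0 <= - derive1 E q)].
Proof.
move=> ClE EE mono; split => //.
- apply: (@subspace_eq_continuous _ _ _ Eg); last exact: continuous_subspaceT ClE.1.
  by move=> q; rewrite inE => hq; exact/esym/EE.
- have [n [b [m [c [b0 binc Hi Hl]]]]] := Cl_pw _ a ClE.
  have bge : forall i, (i <= n)%N -> a <= b i.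
    elim=> [|i IH] ilt; first by rewrite b0.
    exact: le_trans (IH (ltnW ilt)) (ltW (binc i ilt)).
  exists n, b, m, c; split => //.
    move=> i x ilt /andP[x1 x2]; rewrite EE; first by apply: Hi => //; rewrite x1 x2.
    exact: le_trans (bge i (ltnW ilt)) x1.
  move=> x bx; rewrite EE; first exact: Hl.
  exact: le_trans (bge n (leqnn n)) bx.
- by move=> q aq dq; exact: nincr_derive aq mono dq.
Qed.

End Storage3.

Theorem mainTheorem7 (R : realType) (T K : nat) (eta Sbar xbar S0 : R)
    (P : 'I_K -> nat -> R) :
  (0 < K)%N -> 0 < eta <= 1 -> 0 <= S0 <= Sbar -> 0 <= xbar ->
  (* feasibility *)
  (forall k : 'I_K, exists s : nat -> R, feasible T eta Sbar xbar S0 (P k) s) /\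
  (* qualified capacity = energy capacity Sbar (domain Sbar >= S0) *)
  (let E := fun q : R => EUE T eta q xbar S0 P in
   [/\ {within [set q : R | S0 <= q], continuous E},
       pw_linear_from S0 E,
       (forall q1 q2 : R, S0 <= q1 -> q1 <= q2 -> E q2 <= E q1) &
       (forall q : R, S0 < q -> derivable E q 1 -> 0 <= - derive1 E q)]) /\
  (* qualified capacity = power capacity xbar (domain xbar >= 0) *)
  (let E := fun q : R => EUE T eta Sbar q S0 P in
   [/\ {within [set q : R | 0 <= q], continuous E},
       pw_linear_from 0 E,
       (forall q1 q2 : R, 0 <= q1 -> q1 <= q2 -> E q2 <= E q1) &
       (forall q : R, 0 < q -> derivable E q 1 -> 0 <= - derive1 E q)]).
Proof.
move=> K0 /andP[e0 e1] /andP[S00 S0S] x0.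
have e0' : 0 <= eta := ltW e0.
have hS : 0 <= S0 <= Sbar by rewrite S00 S0S.
have Kinv : 0 <= K%:R^-1 :> R by rewrite invr_ge0 ler0n.
split.
  move=> k; exists (gtraj eta Sbar xbar S0 (P k)); exact: gtraj_feas.
split.
- move=> E.
  pose Eg q := K%:R^-1 * \sum_(k < K) (\sum_(1 <= t < T.+1) pminus (P k t) +
      objective T (gtraj eta q xbar S0 (P k))).
  apply: (@final_pack _ E Eg).
  + apply: Cl_scale; apply: Cl_sum => k; apply: Cl_add; first exact: Cl_cst.
    by apply: Cl_obj => t; exact: Cl_gtraj_S.
  + move=> q hq; rewrite /E /EUE /Eg; congr (_ * _); apply: eq_bigr => k _.
    by rewrite (optval_eq T eta q xbar S0 (P k)) // S00 hq.
  + move=> q1 q2 h1 h12; rewrite /E /EUE; apply: ler_wpM2l => //.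
    apply: ler_sum => k _; rewrite lerD2l.
    have h2 : S0 <= q2 by apply: le_trans h1 h12.
    rewrite (optval_eq T eta q2 xbar S0 (P k)) ?S00 //.
    rewrite (optval_eq T eta q1 xbar S0 (P k)) ?S00 //.
    apply: (gtraj_opt T eta q2 xbar S0 (P k)) => //; first by rewrite S00.
    apply: (@feas_mono R T eta q1 q2 xbar xbar S0 (P k) _ h12 (lexx xbar)).
    by apply: gtraj_feas => //; rewrite S00.
- move=> E.
  pose Eg q := K%:R^-1 * \sum_(k < K) (\sum_(1 <= t < T.+1) pminus (P k t) +
      objective T (gtraj eta Sbar q S0 (P k))).
  apply: (@final_pack _ E Eg).
  + apply: Cl_scale; apply: Cl_sum => k; apply: Cl_add; first exact: Cl_cst.
    by apply: Cl_obj => t; exact: Cl_gtraj_X.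
  + move=> q hq; rewrite /E /EUE /Eg; congr (_ * _); apply: eq_bigr => k _.
    by rewrite (optval_eq T eta Sbar q S0 (P k)).
  + move=> q1 q2 h1 h12; rewrite /E /EUE; apply: ler_wpM2l => //.
    apply: ler_sum => k _; rewrite lerD2l.
    have h2 : 0 <= q2 by apply: le_trans h1 h12.
    rewrite (optval_eq T eta Sbar q2 S0 (P k)) //.
    rewrite (optval_eq T eta Sbar q1 S0 (P k)) //.
    apply: (gtraj_opt T eta Sbar q2 S0 (P k)) => //.
    apply: (@feas_mono R T eta Sbar Sbar q1 q2 S0 (P k) _ (lexx Sbar) h12).
    exact: gtraj_feas.
Qed.
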